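(* Let $F:\mathcal A\to\mathcal B$ be a triangle functor between triangulated categories. Then $F$ is faithful if and only if $F$ reflects splitting epimorphisms, i.e. whenever $v$ is a morphism of $\mathcal A$ such that $F(v)$ is a splitting epimorphism in $\mathcal B$, then $v$ is a splitting epimorphism in $\mathcal A$.
   Context: A triangle functor is a pair $(F,\xi)$ with $F$ additive and $\xi:F[1]\to[1]F$ a natural isomorphism such that $F$ sends distinguished triangles $(X,Y,Z,u,v,w)$ to distinguished triangles $(F(X),F(Y),F(Z),F(u),F(v),\xi_XF(w))$. *)

(* Defs.v *)
From HB Require Import structures.
From mathcomp Require Import all_boot all_algebra.

Set Implicit Arguments.
Unset Strict Implicit.
Unset Printing Implicit Defensive.
Import GRing.Theory.
Local Open Scope ring_scope.

Record PreaddCat := {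
  Obj : Type;
  Hom : Obj -> Obj -> zmodType;
  idm : forall X, Hom X X;
  comp : forall X Y Z, Hom Y Z -> Hom X Y -> Hom X Z;
  compA : forall X Y Z W (h : Hom Z W) (g : Hom Y Z) (f : Hom X Y),
      comp h (comp g f) = comp (comp h g) f;
  comp1m : forall X Y (f : Hom X Y), comp (idm Y) f = f;
  compm1 : forall X Y (f : Hom X Y), comp f (idm X) = f;
  compDl : forall X Y Z (g1 g2 : Hom Y Z) (f : Hom X Y),
      comp (g1 + g2) f = comp g1 f + comp g2 f;
  compDr : forall X Y Z (g : Hom Y Z) (f1 f2 : Hom X Y),
      comp g (f1 + f2) = comp g f1 + comp g f2
}.
Arguments idm {p} X.
Arguments comp {p X Y Z} g f.
Arguments Hom p X Y : clear implicits.

Definition is_zero_obj (C : PreaddCat) (Z : Obj C) : Prop := idm Z = 0.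

Definition is_biproduct (C : PreaddCat) (X Y P : Obj C)
  (i1 : Hom C X P) (i2 : Hom C Y P) (p1 : Hom C P X) (p2 : Hom C P Y) : Prop :=
  [/\ comp p1 i1 = idm X, comp p2 i2 = idm Y
    & comp i1 p1 + comp i2 p2 = idm P].

Definition additive (C : PreaddCat) : Prop :=
  (exists Z : Obj C, is_zero_obj Z) /\
  (forall X Y : Obj C, exists (P : Obj C) (i1 : Hom C X P) (i2 : Hom C Y P)
        (p1 : Hom C P X) (p2 : Hom C P Y), is_biproduct i1 i2 p1 p2).

Definition is_iso (C : PreaddCat) (X Y : Obj C) (f : Hom C X Y) : Prop :=
  exists g : Hom C Y X, comp g f = idm X /\ comp f g = idm Y.

Definition split_epi (C : PreaddCat) (X Y : Obj C) (f : Hom C X Y) : Prop :=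
  exists s : Hom C Y X, comp f s = idm Y.

Record AddFunctor (C D : PreaddCat) := {
  fobj : Obj C -> Obj D;
  fmap : forall X Y, Hom C X Y -> Hom D (fobj X) (fobj Y);
  fmap1 : forall X, fmap (idm X) = idm (fobj X);
  fmapM : forall X Y Z (g : Hom C Y Z) (f : Hom C X Y),
      fmap (comp g f) = comp (fmap g) (fmap f);
  fmapD : forall X Y (f g : Hom C X Y), fmap (f + g) = fmap f + fmap g
}.
Arguments fobj {C D} a X.
Arguments fmap {C D} a {X Y} _.

Definition faithful (C D : PreaddCat) (F : AddFunctor C D) : Prop :=
  forall X Y (f g : Hom C X Y), fmap F f = fmap F g -> f = g.

Definition full (C D : PreaddCat) (F : AddFunctor C D) : Prop :=
  forall X Y (g : Hom D (fobj F X) (fobj F Y)), exists f : Hom C X Y, fmap F f = g.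

Definition ess_surj (C D : PreaddCat) (F : AddFunctor C D) : Prop :=
  forall Y : Obj D, exists (X : Obj C) (f : Hom D (fobj F X) Y), is_iso f.

Definition equivalence (C D : PreaddCat) (F : AddFunctor C D) : Prop :=
  [/\ faithful F, full F & ess_surj F].

Record TriCat := {
  TCat :> PreaddCat;
  TC_additive : additive TCat;
  Sh : AddFunctor TCat TCat;
  Sh_equiv : equivalence Sh;
  dist : forall X Y Z : Obj TCat,
      Hom TCat X Y -> Hom TCat Y Z -> Hom TCat Z (fobj Sh X) -> Prop;
  TR1_iso : forall X Y Z X' Y' Z' (u : Hom TCat X Y) (v : Hom TCat Y Z)
      (w : Hom TCat Z (fobj Sh X)) (u' : Hom TCat X' Y') (v' : Hom TCat Y' Z')
      (w' : Hom TCat Z' (fobj Sh X'))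
      (a : Hom TCat X X') (b : Hom TCat Y Y') (c : Hom TCat Z Z'),
      is_iso a -> is_iso b -> is_iso c ->
      comp b u = comp u' a -> comp c v = comp v' b ->
      comp (fmap Sh a) w = comp w' c ->
      dist u v w -> dist u' v' w';
  TR1_id : forall (X Z : Obj TCat), is_zero_obj Z ->
      dist (idm X) (0 : Hom TCat X Z) (0 : Hom TCat Z (fobj Sh X));
  TR1_cone : forall X Y (u : Hom TCat X Y),
      exists (Z : Obj TCat) (v : Hom TCat Y Z) (w : Hom TCat Z (fobj Sh X)),
        dist u v w;
  TR2 : forall X Y Z (u : Hom TCat X Y) (v : Hom TCat Y Z)
      (w : Hom TCat Z (fobj Sh X)),
      dist u v w <-> dist v w (- fmap Sh u);
  TR3 : forall X Y Z X' Y' Z' (u : Hom TCat X Y) (v : Hom TCat Y Z)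
      (w : Hom TCat Z (fobj Sh X)) (u' : Hom TCat X' Y') (v' : Hom TCat Y' Z')
      (w' : Hom TCat Z' (fobj Sh X')) (a : Hom TCat X X') (b : Hom TCat Y Y'),
      dist u v w -> dist u' v' w' -> comp b u = comp u' a ->
      exists c : Hom TCat Z Z',
        comp c v = comp v' b /\ comp (fmap Sh a) w = comp w' c;
  TR4 : forall X Y Z Q1 Q2 Q3 (u : Hom TCat X Y) (v : Hom TCat Y Z)
      (b1 : Hom TCat Y Q1) (c1 : Hom TCat Q1 (fobj Sh X))
      (b2 : Hom TCat Z Q2) (c2 : Hom TCat Q2 (fobj Sh X))
      (b3 : Hom TCat Z Q3) (c3 : Hom TCat Q3 (fobj Sh Y)),
      dist u b1 c1 -> dist (comp v u) b2 c2 -> dist v b3 c3 ->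
      exists (a : Hom TCat Q1 Q2) (b : Hom TCat Q2 Q3),
        [/\ dist a b (comp (fmap Sh b1) c3),
            comp a b1 = comp b2 v, comp c2 a = c1,
            comp b b2 = b3 & comp c3 b = comp (fmap Sh u) c2]
}.
Arguments Sh t : clear implicits.
Arguments dist t {X Y Z} _ _ _.

Record TriFunctor (A B : TriCat) := {
  TF :> AddFunctor A B;
  xi : forall X : Obj A,
      Hom B (fobj TF (fobj (Sh A) X)) (fobj (Sh B) (fobj TF X));
  xi_iso : forall X, is_iso (xi X);
  xi_nat : forall X Y (f : Hom A X Y),
      comp (xi Y) (fmap TF (fmap (Sh A) f)) = comp (fmap (Sh B) (fmap TF f)) (xi X);
  xi_dist : forall X Y Z (u : Hom A X Y) (v : Hom A Y Z)
      (w : Hom A Z (fobj (Sh A) X)),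
      dist A u v w ->
      dist B (fmap TF u) (fmap TF v) (comp (xi X) (fmap TF w))
}.

(* Main.v *)
Require Import Defs.
From mathcomp Require Import ssreflect ssrfun ssrbool ssralg.
Require Import Defs.
Import GRing.Theory.
Local Open Scope ring_scope.

Section Aux.
Variable C : PreaddCat.
Lemma comp0r X Y Z (g : Hom C Y Z) : comp g (0 : Hom C X Y) = 0.
Proof. apply: (addrI (comp g 0)); by rewrite -compDr !addr0. Qed.
Lemma comp0l X Y Z (f : Hom C X Y) : comp (0 : Hom C Y Z) f = 0.
Proof. apply: (addrI (comp 0 f)); by rewrite -compDl !addr0. Qed.
Lemma compNr X Y Z (g : Hom C Y Z) (f : Hom C X Y) : comp g (- f) = - comp g f.
Proof. apply: (addrI (comp g f)); by rewrite -compDr !subrr comp0r. Qed.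
Lemma compNl X Y Z (g : Hom C Y Z) (f : Hom C X Y) : comp (- g) f = - comp g f.
Proof. apply: (addrI (comp g f)); by rewrite -compDl !subrr comp0l. Qed.
End Aux.

Lemma fmap0 C D (F : AddFunctor C D) X Y : fmap F (0 : Hom C X Y) = 0.
Proof. apply: (addrI (fmap F (0 : Hom C X Y))); by rewrite -fmapD !addr0. Qed.
Lemma fmapN C D (F : AddFunctor C D) X Y (f : Hom C X Y) : fmap F (- f) = - fmap F f.
Proof. apply: (addrI (fmap F f)); by rewrite -fmapD !subrr fmap0. Qed.

Lemma L2 (T : TriCat) X Y Z (u : Hom T X Y) (v : Hom T Y Z) (w : Hom T Z (fobj (Sh T) X))
  Q (g : Hom T Q Y) : dist T u v w -> comp v g = 0 -> exists s : Hom T Q X, comp u s = g.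
Proof.
move=> D vg.
have [Z0 HZ0] := proj1 (TC_additive T).
have D1 := TR1_id Q HZ0.
move/TR2: D1 => D1.
move/TR2: D => D'.
have [c [_ Hc]] := TR3 (a:=g) (b:=0) D1 D' (etrans (comp0r _ _ _ _ _) (esym vg)).
rewrite fmap1 compNr compm1 compNl in Hc.
move/oppr_inj: Hc => Hc.
have [Fa Fu _] := Sh_equiv T.
have [s Hs] := Fu _ _ c.
exists s; apply: Fa; by rewrite fmapM Hs.
Qed.

Lemma L1 (T : TriCat) X Y Z (u : Hom T X Y) (v : Hom T Y Z) (w : Hom T Z (fobj (Sh T) X))
  Q (g : Hom T Q Z) : dist T u v w -> comp w g = 0 -> exists s : Hom T Q Y, comp v s = g.
Proof. move/TR2 => D; exact: L2 D. Qed.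

Lemma Lz (T : TriCat) X Y Z (u : Hom T X Y) (v : Hom T Y Z) (w : Hom T Z (fobj (Sh T) X)) :
  dist T u v w -> comp v u = 0.
Proof.
move=> D.
have [Z0 HZ0] := proj1 (TC_additive T).
have D1 := TR1_id X HZ0.
have [c [Hc _]] := TR3 (a:=idm X) (b:=u) D1 D (etrans (compm1 _) (esym (compm1 _))).
by rewrite -Hc comp0r.
Qed.

Arguments Lz {T X Y Z u v w}.
Arguments L1 {T X Y Z u v w Q g}.
Arguments L2 {T X Y Z u v w Q g}.

Theorem proposition3 (A B : TriCat) (F : TriFunctor A B) :
  faithful F <->
  (forall (X Y : Obj A) (v : Hom A X Y), split_epi (fmap F v) -> split_epi v).
Proof.
split.
- move=> Ff X Y v [s Hs].
  have [Z [g [h D]]] := TR1_cone v.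
  have DF := xi_dist F D.
  have Fg0 : fmap F g = fmap F (0 : Hom A Y Z).
    rewrite fmap0 -[fmap F g]compm1 -Hs compA (Lz DF) comp0l //.
  have g0 := Ff _ _ _ _ Fg0.
  rewrite g0 in D.
  have [t Ht] := L2 (g := idm Y) D (comp0l _ _ _ _ _).
  by exists t.
- move=> R.
  have key : forall X Y (f : Hom A X Y), fmap F f = 0 -> f = 0.
    move=> X Y f Ff0.
    have [Z [g [h D]]] := TR1_cone f.
    move/TR2: D => D.
    have DF := xi_dist F D.
    have w0 : comp (xi F Y) (fmap F (- fmap (Sh A) f)) = 0.
      by rewrite fmapN compNr xi_nat Ff0 fmap0 comp0l oppr0.
    rewrite w0 in DF.
    have [s Hs] := L1 (g := idm _) DF (comp0l _ _ _ _ _).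
    have [t Ht] := R _ _ h (ex_intro _ s Hs).
    move/TR2: (D) => D2.
    have Z0 := Lz D2.
    have : comp (comp (- fmap (Sh A) f) h) t = 0 by rewrite Z0 comp0l.
    rewrite -compA Ht compm1 => /(congr1 (fun x => - x)); rewrite opprK oppr0 => Sf0.
    have [Fa _ _] := Sh_equiv A.
    apply: Fa; by rewrite Sf0 fmap0.
  move=> X Y f g Hfg.
  have H0 : fmap F (f - g) = 0 by rewrite fmapD fmapN Hfg subrr.
  exact: (subr0_eq (key X Y (f - g) H0)).
Qed.
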